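(* Let $\mathcal G=(\mathcal V,\mathcal E)$ be a connected undirected graph on $\mathcal V=\{1,\dots,N\}$, and fix a node $i\in\{1,\dots,N-1\}$. Let $\widehat q_i$ be the $i$-th entry of the unweighted least-squares estimate $\widehat{\mathbf q}=\mathbf M^{-1}(\mathbf H\odot\widehat{\mathbf D})\mathbf 1$ on $\mathcal G$ (defined in the context). Consider the directed graph $\overrightarrow{\mathcal G}_i=(\mathcal V,\overrightarrow{\mathcal E}_i)$ and the probabilities $\eta_{j\to\ell,i}$ defined in the context, and let $(\check q_j)$ be the solution of the linear system $$\check q_N=0,\qquad \check q_j=\sum_{\ell\in\mathcal N^-_{ji}}(\check q_\ell+\widehat d_{j,\ell})\,\eta_{j\to\ell,i}$$ on $\overrightarrow{\mathcal G}_i$. Then $\widehat q_i=\check q_i$.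
   Context: Setting: $\widehat d_{j,\ell}$, $(j,\ell)\in\mathcal E$, are given real numbers with $\widehat d_{\ell,j}=-\widehat d_{j,\ell}$ (noisy estimates of quality differences $q_j-q_\ell$), and $\widehat{\mathbf D}=\{\widehat d_{j,\ell}\}$. Let $\rho_j$ be the degree of node $j$ in $\mathcal G$; $[\mathbf H]_{j,\ell}=1/\rho_j$ if $j<N$ and $(j,\ell)\in\mathcal E$, $0$ otherwise; $\mathbf M=\mathbf I-\mathbf H$ (invertible); $\odot$ is the Hadamard product and $\mathbf 1$ the all-ones vector. Let $\mathbf T$ be the $(N-1)\times(N-1)$ matrix obtained from $\mathbf H$ by removing its last row and column, and define for $j<N$: $\theta_{j,i}=\frac{[(\mathbf I-\mathbf T)^{-1}]_{i,j}}{\rho_j}$ (the average number of times an edge incident to $j$ is traversed from $j$ by the standard random walk on $\mathcal G$ started at $i$ and stopped at $N$), and $\theta_{N,i}=0$. The directed graph $\overrightarrow{\mathcal G}_i=(\mathcal V,\overrightarrow{\mathcal E}_i)$ has $(j,\ell)\in\overrightarrow{\mathcal E}_i$ iff $(j,\ell)\in\mathcal E$ and either ($j<N$ and $\ell=N$) or ($j<N$, $\ell<N$ and $\theta_{j,i}>\theta_{\ell,i}$). Let $\mathcal N^-_{ji}=\{\ell:(j,\ell)\in\overrightarrow{\mathcal E}_i\}$ (called the in-neighbors of $j$ in the paper). For $\ell\in\mathcal N^-_{ji}$, $\eta_{j\to\ell,i}=\frac{\theta_{j,i}-\theta_{\ell,i}}{\sum_{\ell'\in\mathcal N^-_{ji}}(\theta_{j,i}-\theta_{\ell',i})}$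 (transition probabilities of a biased random walk on $\overrightarrow{\mathcal G}_i$). *)

(* Defs.v *)
(* Nodes 1..N are modelled by 'I_N with N = n.+1;
   the paper's node N (the anchor) is ord_max. *)
From mathcomp Require Import all_boot all_order all_algebra.
Set Implicit Arguments. Unset Strict Implicit. Unset Printing Implicit Defensive.
Import Order.TTheory GRing.Theory Num.Theory.
Local Open Scope ring_scope.

Section Defs.
Variables (R : realFieldType) (n : nat).
Notation V := 'I_n.+1.
Variable e : rel V.

Definition rho (j : V) : nat := #|[set l | e j l]|.

Definition Hmx : 'M[R]_n.+1 :=
  \matrix_(j, l) (if (j != ord_max) && e j l then ((rho j)%:R)^-1 else 0).

Definition Mmx : 'M[R]_n.+1 := 1%:M - Hmx.

Definition hadamard (A B : 'M[R]_n.+1) : 'M[R]_n.+1 :=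
  \matrix_(j, l) (A j l * B j l).

Definition qhat (D : 'M[R]_n.+1) : 'cV[R]_n.+1 :=
  invmx Mmx *m (hadamard Hmx D *m const_mx 1).

Definition Tmx : 'M[R]_n :=
  \matrix_(a, b) Hmx (widen_ord (leqnSn n) a) (widen_ord (leqnSn n) b).

(* theta_{j,i} for i a node among 1..N-1 (given as i : 'I_n) *)
Definition theta (i : 'I_n) (j : V) : R :=
  match unlift ord_max j with
  | Some j' => invmx (1%:M - Tmx) i j' / (rho j)%:R
  | None => 0
  end.

Definition dedge (i : 'I_n) (j l : V) : bool :=
  [&& e j l, j != ord_max & (l == ord_max) || (theta i l < theta i j)].

Definition eta (i : 'I_n) (j l : V) : R :=
  (theta i j - theta i l) / \sum_(l' | dedge i j l') (theta i j - theta i l').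

End Defs.

(* Main.v *)
Require Import Defs.
From mathcomp Require Import all_boot all_order all_algebra.
From mathcomp Require Import ring lra.
Import Order.TTheory GRing.Theory Num.Theory.
Local Open Scope ring_scope.

Lemma maxp (R : realFieldType) (n : nat) (e : rel 'I_n.+1)
  (e_sym : symmetric e) (e_conn : forall x y : 'I_n.+1, connect e x y)
  (x : 'I_n.+1 -> R) : x ord_max = 0 ->
  (forall j, j != ord_max -> 0 <= \sum_(k | e j k) (x k - x j)) ->
  forall j, x j <= 0.
Proof.
move=> xN Hsub.
case: (@Order.TotalTheory.arg_maxP _ _ _ ord_max predT x isT) => j0 _ Hmax.
set m := x j0 in Hmax *.
have Hm : forall k, x k <= m by move=> k; exact: Hmax.
move=> j; apply: (le_trans (Hm j)).
rewrite leNgt; apply/negP => m0.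
have step : forall u v, e u v -> x u = m -> x v = m.
  move=> u v euv xu.
  have uN : u != ord_max by apply/eqP => uN; move: m0; rewrite -xu uN xN ltxx.
  have H := Hsub u uN.
  have H0 : \sum_(k | e u k) (m - x k) == 0.
    rewrite eq_le; apply/andP; split.
      by rewrite -oppr_ge0 -sumrN; under eq_bigr => k _ do rewrite opprB -xu.
    by apply: sumr_ge0 => k _; rewrite subr_ge0 Hm.
  have nn : forall k, e u k -> 0 <= m - x k by move=> k _; rewrite subr_ge0 Hm.
  move: H0 => /eqP /(psumr_eq0P nn) H1.
  by apply/eqP; rewrite eq_sym -subr_eq0 H1.
have cl : closed e [pred k | x k == m].
  move=> u v euv; rewrite !inE; apply/idP/idP => /eqP H.
    by apply/eqP; apply: step H.
  by apply/eqP; apply: (step v); rewrite // e_sym.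
have := closed_connect cl (e_conn j0 ord_max).
rewrite !inE eqxx xN => /esym/eqP m00.
by move: m0; rewrite -m00 ltxx.
Qed.

Lemma sum_const_rho (R : realFieldType) (n : nat) (e : rel 'I_n.+1) j (c : R) :
  \sum_(k | e j k) c = c *+ rho e j.
Proof. by rewrite /rho -sumr_const; apply: eq_bigl => k; rewrite inE. Qed.

Lemma rho_pos (n : nat) (e : rel 'I_n.+1)
  (e_conn : forall x y : 'I_n.+1, connect e x y) (k j : 'I_n.+1) :
  k != j -> (0 < rho e j)%N.
Proof.
move=> kj; case/connectP: (e_conn j k) => [[|a p]] /=.
  by move=> _ kj'; rewrite kj' eqxx in kj.
case/andP=> eja _ _; apply/card_gt0P; exists a; by rewrite inE.
Qed.

Lemma H_entry (R : realFieldType) (n : nat) (e : rel 'I_n.+1) j (x : 'I_n.+1 -> R) :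
  j != ord_max ->
  \sum_k x k * Hmx R e j k = (\sum_(k | e j k) x k) / (rho e j)%:R.
Proof.
move=> jN; rewrite mulr_suml [RHS]big_mkcond; apply: eq_bigr => k _.
by rewrite mxE jN /=; case: (e j k); rewrite ?mulr0.
Qed.

Lemma HN_entry (R : realFieldType) (n : nat) (e : rel 'I_n.+1) k :
  Hmx R e ord_max k = 0.
Proof. by rewrite mxE eqxx. Qed.

Lemma M_unit (R : realFieldType) (n : nat) (e : rel 'I_n.+1)
  (e_sym : symmetric e) (e_conn : forall x y : 'I_n.+1, connect e x y) :
  (0 < n)%N -> Mmx R e \in unitmx.
Proof.
move=> n0.
have rhoP : forall j : 'I_n.+1, (0 < rho e j)%N.
  move=> j; have [jN|jN] := eqVneq j ord_max.
    apply: (@rho_pos n e e_conn (inord 0)); rewrite jN; apply/eqP => /(congr1 val).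
    rewrite /= inordK // => H; by rewrite -H in n0.
  by apply: (@rho_pos n e e_conn ord_max); rewrite eq_sym.
rewrite -unitmx_tr -row_free_unit; apply: inj_row_free => v Hv.
set x := fun k => v 0 k.
have Hx : forall j, x j - \sum_k x k * Hmx R e j k = 0.
  move=> j; have := congr1 (fun A : 'M[R]_(1, n.+1) => A 0 j) Hv.
  rewrite /Mmx [(_ - _)^T]linearB /= trmx1 mulmxBr mulmx1 !mxE.
  move=> H; apply: eq_trans _ H; congr (_ - _); apply: eq_bigr => k _; by rewrite !mxE.
have xN : x ord_max = 0.
  have := Hx ord_max; rewrite big1 ?subr0 // => k _; by rewrite HN_entry mulr0.
have harm : forall j, j != ord_max -> \sum_(k | e j k) (x k - x j) = 0.
  move=> j jN; have := Hx j; rewrite H_entry // sumrB sum_const_rho.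
  have r0 : (rho e j)%:R != 0 :> R by rewrite pnatr_eq0 -lt0n rhoP.
  move/eqP; rewrite subr_eq0 => /eqP ->.
  by rewrite -[X in _ - X]mulr_natr divfK // subrr.
have le1 := @maxp R n e e_sym e_conn x xN.
have le2 := @maxp R n e e_sym e_conn (fun k => - x k).
apply/rowP => k; rewrite mxE; apply/eqP; rewrite eq_le; apply/andP; split.
  by apply: le1 => j jN; rewrite harm.
rewrite -oppr_le0; apply: le2; first by rewrite xN oppr0.
move=> j jN; rewrite (eq_bigr (fun k => - (x k - x j))); last by move=> ? _; rewrite opprB opprK addrC.
by rewrite sumrN harm // oppr0.
Qed.

Lemma rho_all (n : nat) (e : rel 'I_n.+1)
  (e_conn : forall x y : 'I_n.+1, connect e x y) :
  (0 < n)%N -> forall j : 'I_n.+1, (0 < rho e j)%N.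
Proof.
move=> n0 j; have [jN|jN] := eqVneq j ord_max.
  apply: (@rho_pos n e e_conn (inord 0)); rewrite jN; apply/eqP => /(congr1 val).
  rewrite /= inordK // => H; by rewrite -H in n0.
by apply: (@rho_pos n e e_conn ord_max); rewrite eq_sym.
Qed.

Lemma inv_left (R : fieldType) m (W A : 'M[R]_m) : W *m A = 1%:M -> invmx A = W.
Proof.
case: m W A => [|m] W A H; first by apply/matrixP => [[]].
have [_ Au] := mulmx1_unit H.
by rewrite -[W]mulmx1 -(mulmxV Au) mulmxA H mul1mx.
Qed.

Theorem proposition4 (R : realFieldType) (n : nat) (e : rel 'I_n.+1)
  (e_sym : symmetric e) (e_irr : irreflexive e)
  (e_conn : forall x y : 'I_n.+1, connect e x y)
  (D : 'M[R]_n.+1)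
  (D_anti : forall j l : 'I_n.+1, e j l -> D l j = - D j l)
  (i : 'I_n)
  (qc : 'I_n.+1 -> R)
  (qc_N : qc ord_max = 0)
  (qc_eq : forall j : 'I_n.+1, j != ord_max ->
     qc j = \sum_(l | dedge R e i j l) (qc l + D j l) * eta R e i j l) :
  qhat e D (widen_ord (leqnSn n) i) 0 = qc (widen_ord (leqnSn n) i).
Proof.
have n0 : (0 < n)%N by apply: leq_ltn_trans (ltn_ord i).
have rhoP := @rho_all n e e_conn n0.
have r0 : forall j, (rho e j)%:R != 0 :> R by move=> j; rewrite pnatr_eq0 -lt0n rhoP.
set w := widen_ord (leqnSn n).
have weq : forall a b, (w a == w b) = (a == b).
  move=> a b; apply/eqP/eqP => [/(congr1 val) /= H|->] //; exact: val_inj.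
have wN : forall a, w a != ord_max by move=> a; rewrite -val_eqE /= neq_ltn ltn_ord.
have Munit := @M_unit R n e e_sym e_conn n0.
set Mi := invmx (Mmx R e).
set W : 'M[R]_n := \matrix_(a, b) Mi (w a) (w b).
have WA : W *m (1%:M - Tmx R e) = 1%:M.
  apply/matrixP => a b; rewrite !mxE.
  have := congr1 (fun A : 'M[R]_n.+1 => A (w a) (w b)) (mulVmx Munit).
  have MN : Mmx R e ord_max (w b) = 0.
    by rewrite /Mmx !mxE [ord_max == _]eq_sym (negbTE (wN b)) eqxx /= subr0.
  rewrite !mxE big_ord_recr /= weq MN mulr0 addr0 => <-.
  by apply: eq_bigr => c _; rewrite /Mmx !mxE weq.
have Wdef : forall a b, W a b = Mi (w a) (w b) by move=> a b; rewrite mxE.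
clearbody W.
have invA : invmx (1%:M - Tmx R e) = W by apply: inv_left.
set th := theta R e i.
have thN : th ord_max = 0 by rewrite /th /theta unlift_none.
have thw : forall a, th (w a) = W i a / (rho e (w a))%:R.
  move=> a; have la : lift ord_max a = w a by apply: ord_inj; rewrite lift_max.
  by rewrite /th /theta -la liftK invA.
have WI : forall a, W i a = th (w a) * (rho e (w a))%:R.
  by move=> a; rewrite thw divfK.
have ex_w : forall j, j != ord_max -> exists a, j = w a.
  move=> j jN; have ja : (j < n)%N.
    rewrite ltn_neqAle -ltnS ltn_ord andbT; apply: contra jN => /eqP H.
    by apply/eqP/val_inj.
  by exists (Ordinal ja); apply: val_inj.
have div : forall j, j != ord_max -> \sum_(k | e j k) (th j - th k) = (j == w i)%:R.
  move=> j /ex_w [a ->].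
  have := congr1 (fun A : 'M[R]_n => A i a) WA; rewrite !mxE.
  rewrite weq eq_sym => <-.
  have s1 : \sum_c W i c * (c == a)%:R = W i a.
    rewrite (bigD1 a) //= eqxx mulr1 big1 ?addr0 // => c /negbTE ->; by rewrite mulr0.
  have s2 : \sum_c W i c * Tmx R e c a = \sum_(k | e (w a) k) th k.
    rewrite [RHS]big_mkcond big_ord_recr /= thN if_same addr0.
    apply: eq_bigr => c _; rewrite !mxE (wN c) /= [e (w c) _]e_sym.
    by case: (e (w a) (w c)); rewrite ?mulr0 // WI mulrK.
  rewrite (eq_bigr (fun c => W i c * (c == a)%:R - W i c * Tmx R e c a)); last first.
    by move=> c _; rewrite !mxE mulrBr.
  by rewrite [RHS]sumrB s1 s2 sumrB sum_const_rho WI mulr_natr.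
have th_ge0 : forall j, 0 <= th j.
  move=> j; rewrite -oppr_le0; apply: (@maxp R n e e_sym e_conn (fun k => - th k)).
    by rewrite thN oppr0.
  move=> k kN; rewrite (eq_bigr (fun l => th k - th l)); last first.
    by move=> l _; rewrite opprK addrC.
  by rewrite div // ler0n.
set f := fun j l => th j - th l.
set S := fun j => \sum_(l | dedge R e i j l) f j l.
have f_ge0 : forall j l, dedge R e i j l -> 0 <= f j l.
  move=> j l /and3P [_ _ /orP [/eqP -> | lt]]; rewrite /f.
    by rewrite thN subr0.
  by rewrite subr_ge0 ltW.
have eq1 : forall j, S j * qc j = \sum_(l | dedge R e i j l) f j l * (qc l + D j l).
  move=> j; have [->|jN] := eqVneq j ord_max.
    rewrite /S !big_pred0 ?mul0r // => l; by rewrite /dedge eqxx /= andbF.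
  rewrite (qc_eq j jN); have [S0|S0] := eqVneq (S j) 0.
    rewrite S0 mul0r big1 // => l dl.
    by rewrite (psumr_eq0P (f_ge0 j) S0 dl) mul0r.
  rewrite mulr_sumr; apply: eq_bigr => l _; rewrite /eta -/(f j l) -/(S j).
  by field.
have decomp : forall l k, (if e l k then f l k else 0) =
    (if dedge R e i l k then f l k else 0) - (if dedge R e i k l then f k l else 0).
  move=> l k; rewrite /dedge [e k l]e_sym.
  case elk: (e l k) => /=; last by rewrite subr0.
  have [lE|lN] := eqVneq l ord_max.
    rewrite lE in elk *.
    have kN : k != ord_max by apply/eqP => kN; rewrite kN e_irr in elk.
    by rewrite kN /= sub0r /f opprB.
  have [->|kN] := eqVneq k ord_max; first by rewrite /= subr0.
  rewrite /= /f; case: (ltgtP (th k) (th l)) => [lt|lt|->].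
  - by rewrite subr0.
  - by rewrite sub0r opprB.
  - by rewrite subrr subr0.
have flow : forall l, l != ord_max ->
    S l - \sum_(j | dedge R e i j l) f j l = (l == w i)%:R.
  move=> l lN; rewrite -div // big_mkcond /S [X in X - _]big_mkcond [X in _ - X]big_mkcond.
  by rewrite -sumrB [RHS]big_mkcond; apply: eq_bigr => k _; rewrite decomp.
set X := \sum_j \sum_(l | dedge R e i j l) f j l * D j l.
have sum3 : qc (w i) = X.
  have E1 : \sum_j S j * qc j = \sum_j \sum_(l | dedge R e i j l) f j l * qc l + X.
    rewrite (eq_bigr (fun j => \sum_(l | dedge R e i j l) f j l * qc l
        + \sum_(l | dedge R e i j l) f j l * D j l)) ?big_split // => j _.
    by rewrite eq1 -big_split /=; apply: eq_bigr => l _; rewrite mulrDr.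
  have E2 : \sum_j \sum_(l | dedge R e i j l) f j l * qc l
          = \sum_l (\sum_(j | dedge R e i j l) f j l) * qc l.
    rewrite (eq_bigr (fun j => \sum_l if dedge R e i j l then f j l * qc l else 0)); last first.
      by move=> j _; rewrite big_mkcond.
    rewrite exchange_big; apply: eq_bigr => l _; rewrite [in RHS]big_mkcond mulr_suml.
    by apply: eq_bigr => j _; case: (dedge R e i j l); rewrite ?mul0r.
  have E3 : \sum_l (\sum_(j | dedge R e i j l) f j l) * qc l = \sum_l S l * qc l - qc (w i).
    have H : forall l, (\sum_(j | dedge R e i j l) f j l) * qc l
                     = S l * qc l - (l == w i)%:R * qc l.
      move=> l; have [->|lN] := eqVneq l ord_max; first by rewrite qc_N !mulr0 subr0.
      by rewrite -mulrBl -(flow l lN) opprB addrC subrK.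
    rewrite (eq_bigr _ (fun l _ => H l)) sumrB; congr (_ - _).
    rewrite (bigD1 (w i)) //= eqxx mul1r big1 ?addr0 // => l /negbTE ->; by rewrite mul0r.
  move: E1; rewrite E2 E3 => E; lra.
set Y := \sum_c \sum_(l | e c l) th c * D c l.
have Q : qhat e D (w i) 0 = Y.
  have bN : (hadamard (Hmx R e) D *m (const_mx 1 : 'cV[R]_n.+1)) ord_max 0 = 0.
    by rewrite mxE big1 // => l _; rewrite !mxE eqxx /= mul0r mul0r.
  have bw : forall a, Mi (w i) (w a) * (hadamard (Hmx R e) D *m (const_mx 1 : 'cV[R]_n.+1)) (w a) 0
      = \sum_(l | e (w a) l) th (w a) * D (w a) l.
    move=> a; rewrite -Wdef WI mxE mulr_sumr [RHS]big_mkcond; apply: eq_bigr => l _.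
    rewrite [hadamard _ _ _ _]mxE [const_mx _ _ _]mxE mulr1 mxE (wN a) /=.
    case: (e (w a) l); last by rewrite mul0r mulr0.
    have := r0 (w a); move=> ?; field; done.
  rewrite /qhat mxE big_ord_recr /= bN mulr0 addr0.
  have Z : \sum_(l | e ord_max l) th ord_max * D ord_max l = 0.
    by rewrite thN big1 // => l _; rewrite mul0r.
  rewrite /Y big_ord_recr /= Z addr0.
  by apply: eq_bigr => a _; exact: bw.
have YN : \sum_c \sum_(l | e c l) th l * D c l = - Y.
  rewrite /Y -sumrN (eq_bigr (fun c => \sum_l (if e c l then th l * D c l else 0))); last first.
    by move=> c _; rewrite big_mkcond.
  rewrite exchange_big; apply: eq_bigr => l _; rewrite -sumrN [RHS]big_mkcond.
  apply: eq_bigr => c _; rewrite [e c l]e_sym; case elc: (e l c) => //.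
  by rewrite (D_anti _ _ elc) mulrN.
have Y2 : Y + Y = \sum_c \sum_(l | e c l) f c l * D c l.
  have H : forall c, \sum_(l | e c l) f c l * D c l
      = \sum_(l | e c l) th c * D c l - \sum_(l | e c l) th l * D c l.
    by move=> c; rewrite -sumrB; apply: eq_bigr => l _; rewrite mulrBl.
  by rewrite (eq_bigr _ (fun c _ => H c)) sumrB YN opprK.
have X2 : \sum_c \sum_(l | e c l) f c l * D c l = X + X.
  have H : forall c, \sum_(l | e c l) f c l * D c l
      = \sum_(l | dedge R e i c l) f c l * D c l + \sum_(l | dedge R e i l c) f l c * D l c.
    move=> c; rewrite big_mkcond [X in _ = X + _]big_mkcond [X in _ = _ + X]big_mkcond -big_split.
    apply: eq_bigr => l _ /=; case e0: (e c l); last first.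
      have d1 : dedge R e i c l = false by rewrite /dedge e0.
      have d2 : dedge R e i l c = false by rewrite /dedge e_sym e0.
      by rewrite d1 d2 addr0.
    have dc := decomp c l; rewrite e0 in dc.
    rewrite (D_anti _ _ e0) {1}dc.
    by case: (dedge R e i c l); case: (dedge R e i l c); rewrite /=; ring.
  rewrite (eq_bigr _ (fun c _ => H c)) big_split /=; congr (_ + _).
  rewrite (eq_bigr (fun c => \sum_l (if dedge R e i l c then f l c * D l c else 0))); last first.
    by move=> c _; rewrite big_mkcond.
  rewrite exchange_big /X; apply: eq_bigr => l _; by rewrite [RHS]big_mkcond.
rewrite Q sum3; lra.
Qed.
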